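(* Let $n=p_1p_2$, where $p_1,p_2$ are distinct primes. For $i=1,2$ let $s_i,t_i$ be positive integers with $s_it_i=p_i-1$ and let $g_i$ be a generator of $\mathbb{Z}_{p_i}^\times$. Let $d=\gcd(s_1,s_2)$. Let $e$ be an integer satisfying $$e\equiv g_1^{t_1}\pmod{p_1},\qquad e\equiv g_2^{t_2}\pmod{p_2},$$ and let $G=\langle e\rangle$ be the subgroup of $\mathbb{Z}_n^\times$ generated by $e$. Then the coset index function $f_G$ is a $(p_1p_2,\ 1+t_1+t_2+dt_1t_2,\ \{a_0,a_1,a_2\})$ zero-difference function, where $$a_0=\frac{1}{d}(s_1s_2-s_1-s_2)+1,\qquad a_1=\frac{(p_1-1)s_2}{d}-p_1+s_2,\qquad a_2=\frac{(p_2-1)s_1}{d}-p_2+s_1.$$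
   Context: For a subgroup $G$ of $\mathbb{Z}_n^\times$ and $r\in\mathbb{Z}_n$, the coset $rG=\{rg\mid g\in G\}$; these cosets partition $\mathbb{Z}_n$, forming a set $D_G$. The coset index function induced by $G$ is $f_G:\mathbb{Z}_n\to\mathbb{Z}_{|D_G|}$, $f_G(x)=h_G(C_x)$, where $C_x$ is the coset containing $x$ and $h_G:D_G\to\mathbb{Z}_{|D_G|}$ is a fixed bijection. A function $f:A\to B$ between finite abelian groups is an $(n,m,S)$ zero-difference function if $n=|A|$, $m=|f(A)|$, and for every nonzero $a\in A$, $|\{x\in A\mid f(x+a)=f(x)\}|\in S$. Here $A=(\mathbb{Z}_n,+)$. *)

(* Defs.v *)
From HB Require Import structures.
From mathcomp Require Import all_boot all_order all_fingroup all_algebra.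
Set Implicit Arguments. Unset Strict Implicit. Unset Printing Implicit Defensive.
Import GRing.Theory.
Local Open Scope ring_scope.

Definition zero_difference (A B : finZmodType) (f : A -> B)
    (n m : nat) (S : pred nat) : Prop :=
  [/\ #|A| = n, #|[set f x | x : A]| = m &
      forall a : A, a != 0 -> S #|[set x : A | f (x + a) == f x]|].

(* The element x of Z_n viewed in Z_n^x (x must be a unit; default 1). *)
Definition unit_of (n : nat) (x : 'Z_n) : {unit 'Z_n} := insubd (1%g : {unit 'Z_n}) x.

Definition gen_units (n : nat) (x : 'Z_n) : {group {unit 'Z_n}} :=
  <[unit_of x]>%G.

Definition zcoset (n : nat) (G : {set {unit 'Z_n}}) (r : 'Z_n) : {set 'Z_n} :=
  [set r * val g | g in G].

Definition zcosets (n : nat) (G : {set {unit 'Z_n}}) : {set {set 'Z_n}} :=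
  [set zcoset G r | r : 'Z_n].

Definition coset_index_fun (n : nat) (G : {set {unit 'Z_n}}) (B : Type)
    (h : {set 'Z_n} -> B) (x : 'Z_n) : B := h (zcoset G x).

(* Main.v *)
Require Import Defs.
From HB Require Import structures.
From mathcomp Require Import all_boot all_order all_fingroup all_algebra.
From mathcomp Require Import all_field all_solvable ring zify.
Import GRing.Theory FinRing.Theory Num.Theory.
Local Open Scope ring_scope.

Definition pi (p m : nat) (x : 'Z_m) : 'F_p := (nat_of_ord x)%:R.
Arguments pi p {m} x.

Section Pi.
Variables (p m : nat).
Hypotheses (pp : prime p) (pm : (p %| m)%N) (m1 : (1 < m)%N).

Lemma valZD (x y : 'Z_m) : nat_of_ord (x + y) = ((x + y) %% m)%N.
Proof. by rewrite /=; congr (_ %% _)%N; apply: Zp_cast. Qed.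

Lemma valZM (x y : 'Z_m) : nat_of_ord (x * y) = ((x * y) %% m)%N.
Proof. by rewrite /=; congr (_ %% _)%N; apply: Zp_cast. Qed.

Lemma pi_modm k : ((k %% m)%:R : 'F_p) = k%:R.
Proof. by rewrite -(Fp_nat_mod pp) modn_dvdm // Fp_nat_mod. Qed.

Lemma piD (x y : 'Z_m) : pi p (x + y) = pi p x + pi p y.
Proof. by rewrite /pi valZD pi_modm natrD. Qed.

Lemma piM (x y : 'Z_m) : pi p (x * y) = pi p x * pi p y.
Proof. by rewrite /pi valZM pi_modm natrM. Qed.

Lemma pi_nat k : pi p (k%:R : 'Z_m) = k%:R.
Proof. by rewrite /pi val_Zp_nat // pi_modm. Qed.

Lemma pi0 : pi p (0 : 'Z_m) = 0.
Proof. exact: (pi_nat 0). Qed.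

Lemma pi1 : pi p (1 : 'Z_m) = 1.
Proof. exact: (pi_nat 1). Qed.

Lemma piN (x : 'Z_m) : pi p (- x) = - pi p x.
Proof. by apply/eqP; rewrite -subr_eq0 opprK -piD addNr pi0. Qed.

Lemma piB (x y : 'Z_m) : pi p (x - y) = pi p x - pi p y.
Proof. by rewrite piD piN. Qed.

Lemma pi_int (z : int) : pi p (z%:~R : 'Z_m) = z%:~R.
Proof. by case: z => k; rewrite ?NegzE ?mulrNz /= ?piN pi_nat. Qed.

Lemma piX (x : 'Z_m) k : pi p (x ^+ k) = pi p x ^+ k.
Proof. by elim: k => [|k IH]; rewrite ?expr0 ?pi1 // !exprS piM IH. Qed.

Lemma pi_eq (x y : 'Z_m) : (pi p x == pi p y) = (nat_of_ord x == y %[mod p])%N.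
Proof.
apply/eqP/eqP => [H|H]; last by rewrite /pi -(Fp_nat_mod pp) H Fp_nat_mod.
by have := congr1 val H; rewrite /pi /= !val_Fp_nat.
Qed.

End Pi.

Lemma valZ_lt m (x : 'Z_m) : (1 < m)%N -> (nat_of_ord x < m)%N.
Proof. by move=> m1; rewrite -[X in (_ < X)%N](Zp_cast m1); exact: ltn_ord. Qed.

Lemma pi_inj p1 p2 (x y : 'Z_(p1 * p2)) : prime p1 -> prime p2 -> p1 != p2 ->
  pi p1 x = pi p1 y -> pi p2 x = pi p2 y -> x = y.
Proof.
move=> pp1 pp2 ne H1 H2.
have m1 : (1 < p1 * p2)%N by have := prime_gt1 pp1; have := prime_gt1 pp2; nia.
have cop : coprime p1 p2 by rewrite prime_coprime // dvdn_prime2 // eq_sym.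
move/eqP: H1; rewrite pi_eq ?dvdn_mulr // => H1.
move/eqP: H2; rewrite pi_eq ?dvdn_mull // => H2.
have := chinese_remainder cop x y; rewrite H1 H2 /= => /eqP.
rewrite !modn_small ?valZ_lt // => H; exact: val_inj.
Qed.


Lemma exp1_neq0 (F : fieldType) (c : F) n : c ^+ n = 1 -> (0 < n)%N -> c != 0.
Proof.
move=> H n0; apply/eqP => c0; move: H; rewrite c0 expr0n.
by case: n n0 => // n _ /= /eqP; rewrite eq_sym oner_eq0.
Qed.

Lemma exp_diff (F : fieldType) (c : F) i j : c != 0 -> (i <= j)%N ->
  c ^+ i = c ^+ j -> c ^+ (j - i) = 1.
Proof.
move=> c0 ij H; apply: (mulfI (expf_neq0 i c0)).
by rewrite -exprD subnKC // mulr1.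
Qed.

Lemma exp_inj (F : fieldType) (c : F) s i j :
  (forall k, (c ^+ k == 1) = (s %| k)%N) -> (i < s)%N -> (j < s)%N ->
  c ^+ i = c ^+ j -> i = j.
Proof.
move=> hc; wlog ij : i j / (i <= j)%N.
  move=> W hi hj H; case: (leqP i j) => [ij|/ltnW ji]; first exact: W.
  by symmetry; apply: W.
move=> hi hj H.
have c0 : c != 0 by apply: (@exp1_neq0 _ _ s); [apply/eqP; rewrite hc | lia].
have hd : (s %| j - i)%N by rewrite -hc; apply/eqP; exact: (@exp_diff _ c i j c0 ij H).
case: (posnP (j - i)) => [|p]; [lia | have := dvdn_leq p hd; lia].
Qed.

Lemma exp_inj2 (F1 F2 : fieldType) (c1 : F1) (c2 : F2) s1 s2 L i j :
  (forall k, (c1 ^+ k == 1) = (s1 %| k)%N) ->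
  (forall k, (c2 ^+ k == 1) = (s2 %| k)%N) ->
  (forall k, (L %| k) = (s1 %| k) && (s2 %| k))%N ->
  (i < L)%N -> (j < L)%N ->
  c1 ^+ i = c1 ^+ j -> c2 ^+ i = c2 ^+ j -> i = j.
Proof.
move=> hc1 hc2 hL; wlog ij : i j / (i <= j)%N.
  move=> W hi hj H1 H2; case: (leqP i j) => [ij|/ltnW ji]; first exact: W.
  by symmetry; apply: W.
move=> hi hj H1 H2.
have /andP[d1 d2] : ((s1 %| L) && (s2 %| L))%N by rewrite -hL.
have c10 : c1 != 0 by apply: (@exp1_neq0 _ _ L); [apply/eqP; rewrite hc1 | lia].
have c20 : c2 != 0 by apply: (@exp1_neq0 _ _ L); [apply/eqP; rewrite hc2 | lia].
have /eqP := @exp_diff _ c1 i j c10 ij H1; rewrite hc1 => e1.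
have /eqP := @exp_diff _ c2 i j c20 ij H2; rewrite hc2 => e2.
have hd : (L %| j - i)%N by rewrite hL e1 e2.
case: (posnP (j - i)) => [|p]; [lia | have := dvdn_leq p hd; lia].
Qed.

Lemma count1 (F : finFieldType) (c a : F) s : (0 < s)%N ->
  (forall k, (c ^+ k == 1) = (s %| k)%N) -> a != 0 ->
  #|[set x : F | [exists i : 'I_s, x + a == x * c ^+ i]]| = s.-1.
Proof.
move=> s0 hc a0.
pose f := fun i : 'I_s => a / (c ^+ i - 1).
have cn1 : forall i : 'I_s, nat_of_ord i != 0%N -> c ^+ i - 1 != 0.
  move=> i i0; rewrite subr_eq0 hc; apply/negP => /dvdn_leq.
  have := ltn_ord i; lia.
have -> : [set x | [exists i : 'I_s, x + a == x * c ^+ i]] =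
          f @: [set i : 'I_s | nat_of_ord i != 0%N].
  apply/setP => x; rewrite inE; apply/existsP/imsetP.
    case=> i /eqP hx.
    have i0 : nat_of_ord i != 0%N.
      apply/eqP => i0; move: hx; rewrite i0 expr0 mulr1 => /eqP.
      by rewrite -subr_eq0 addrC addKr (negPf a0).
    exists i; first by rewrite inE.
    rewrite /f; have -> : a = x * (c ^+ i - 1).
      by rewrite mulrBr mulr1 -hx addrC addKr.
    by rewrite mulfK ?cn1.
  case=> i; rewrite inE => i0 ->; exists i; apply/eqP; rewrite /f.
  have := cn1 i i0; set C := c ^+ i => C0.
  by field.
rewrite card_in_imset.
  move: s0 hc f cn1; case: s => // s' _ _ _ _.
  have -> : s'.+1.-1 = #|'I_s'.+1|.-1 by rewrite card_ord.
  rewrite -(cardsC1 (ord0 : 'I_s'.+1)).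
  by apply: eq_card => i; rewrite !inE; congr negb; apply/eqP/eqP => [/val_inj|->].
move=> i j; rewrite !inE => i0 j0; rewrite /f => /(mulfI a0) /invr_inj /eqP.
rewrite subr_eq subrK => /eqP H; apply: val_inj.
exact: (@exp_inj _ c s i j hc (ltn_ord i) (ltn_ord j) H).
Qed.


Lemma caseA (F1 F2 : finFieldType) (c1 : F1) (c2 : F2) s1 s2 L (b1 : F1) (b2 : F2) :
  (0 < L)%N ->
  (forall k, (c1 ^+ k == 1) = (s1 %| k)%N) ->
  (forall k, (c2 ^+ k == 1) = (s2 %| k)%N) ->
  (forall k, (L %| k) = (s1 %| k) && (s2 %| k))%N ->
  b1 != 0 -> b2 != 0 ->
  #|[set y : F1 * F2 | [exists i : 'I_L,
       (y.1 + b1 == y.1 * c1 ^+ i) && (y.2 + b2 == y.2 * c2 ^+ i)]]|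
  = #|[set i : 'I_L | ~~ (s1 %| i)%N && ~~ (s2 %| i)%N]|.
Proof.
move=> L0 hc1 hc2 hL b10 b20.
pose f := fun i : 'I_L => (b1 / (c1 ^+ i - 1), b2 / (c2 ^+ i - 1)).
have -> : [set y : F1 * F2 | [exists i : 'I_L,
       (y.1 + b1 == y.1 * c1 ^+ i) && (y.2 + b2 == y.2 * c2 ^+ i)]] =
          f @: [set i : 'I_L | ~~ (s1 %| i)%N && ~~ (s2 %| i)%N].
  apply/setP => [[x1 x2]]. rewrite inE /=. apply/existsP/imsetP.
    case=> i /andP[/eqP h1 /eqP h2].
    have e1 : b1 = x1 * (c1 ^+ i - 1) by rewrite mulrBr mulr1 -h1 addrC addKr.
    have e2 : b2 = x2 * (c2 ^+ i - 1) by rewrite mulrBr mulr1 -h2 addrC addKr.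
    have n1 : c1 ^+ i - 1 != 0 by apply: contraNneq b10 => z; rewrite e1 z mulr0.
    have n2 : c2 ^+ i - 1 != 0 by apply: contraNneq b20 => z; rewrite e2 z mulr0.
    exists i.
      by rewrite inE -hc1 -hc2 -[_ == 1]subr_eq0 n1 -[_ == 1]subr_eq0 n2.
    by rewrite /f e1 e2 !mulfK.
  case=> i; rewrite inE -hc1 -hc2 -[c1 ^+ _ == 1]subr_eq0 -[c2 ^+ _ == 1]subr_eq0 => /andP[n1 n2] [-> ->].
  exists i; apply/andP; split; apply/eqP.
    by move: n1; set C := c1 ^+ i => n1; field.
  by move: n2; set C := c2 ^+ i => n2; field.
rewrite card_in_imset //.
move=> i j _ _.
rewrite /f => -[/(mulfI b10) /invr_inj /eqP H1 /(mulfI b20) /invr_inj /eqP H2].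
move: H1 H2; rewrite !subr_eq !subrK => /eqP H1 /eqP H2; apply: val_inj.
exact: (@exp_inj2 _ _ c1 c2 s1 s2 L i j hc1 hc2 hL (ltn_ord i) (ltn_ord j) H1 H2).
Qed.

Lemma card_dvd L s : (0 < s)%N -> (s %| L)%N ->
  #|[set i : 'I_L | (s %| i)%N]| = (L %/ s)%N.
Proof.
move=> s0 sL.
have lt : forall j : 'I_(L %/ s), (j * s < L)%N.
  by move=> j; rewrite -[X in (_ < X)%N](divnK sL) ltn_mul2r s0 ltn_ord.
pose f := fun j : 'I_(L %/ s) => Ordinal (lt j).
have -> : [set i : 'I_L | (s %| i)%N] = f @: setT.
  apply/setP => i; rewrite inE; apply/idP/imsetP.
    move=> di; have lti : (i %/ s < L %/ s)%N.
      by rewrite ltn_divLR // divnK // ltn_ord.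
    by exists (Ordinal lti) => //; apply: val_inj => /=; rewrite divnK.
  by case=> j _ ->; rewrite /= dvdn_mull.
rewrite card_imset ?cardsT ?card_ord // => j k /(congr1 val) /= /eqP.
by rewrite eqn_pmul2r // => /eqP; apply: val_inj.
Qed.

Lemma count_nd L s1 s2 : (0 < L)%N -> (0 < s1)%N -> (0 < s2)%N ->
  (forall k, (L %| k) = (s1 %| k) && (s2 %| k))%N ->
  (#|[set i : 'I_L | ~~ (s1 %| i)%N && ~~ (s2 %| i)%N]| + L %/ s1 + L %/ s2 = L + 1)%N.
Proof.
move=> L0 s10 s20 hL.
have /andP[d1 d2] : ((s1 %| L) && (s2 %| L))%N by rewrite -hL.
set A := [set i : 'I_L | (s1 %| i)%N]; set B := [set i : 'I_L | (s2 %| i)%N].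
have -> : [set i : 'I_L | ~~ (s1 %| i)%N && ~~ (s2 %| i)%N] = ~: (A :|: B).
  by apply/setP => i; rewrite !inE negb_or.
have AB : A :&: B = [set Ordinal L0].
  apply/setP => i; rewrite !inE -hL; apply/idP/eqP => [di|->]; last exact: dvdn0.
  apply: val_inj => /=; case: (posnP i) => // p.
  have := dvdn_leq p di; have := ltn_ord i; lia.
have cA : #|A| = (L %/ s1)%N by apply: card_dvd.
have cB : #|B| = (L %/ s2)%N by apply: card_dvd.
have := cardsUI A B; rewrite AB cards1 cA cB.
have := cardsC (A :|: B); rewrite card_ord; lia.
Qed.
Lemma caseB (F1 F2 : finFieldType) (c1 : F1) (c2 : F2) s1 s2 d u1 u2 L (b1 : F1) :
  (0 < d)%N -> (0 < u1)%N -> (0 < u2)%N ->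
  s1 = (d * u1)%N -> s2 = (d * u2)%N -> L = (d * u1 * u2)%N ->
  (forall k, (c1 ^+ k == 1) = (s1 %| k)%N) ->
  (forall k, (c2 ^+ k == 1) = (s2 %| k)%N) ->
  (forall k, (L %| k) = (s1 %| k) && (s2 %| k))%N ->
  b1 != 0 ->
  addn #|[set y : F1 * F2 | [exists i : 'I_L,
       (y.1 + b1 == y.1 * c1 ^+ i) && (y.2 + 0 == y.2 * c2 ^+ i)]]| #|F2|
   = addn s1 (muln u1 #|F2|.-1).
Proof.
move=> d0 u10 u20 hs1 hs2 hLd hc1 hc2 hL b10.
have s10 : (0 < s1)%N by rewrite hs1 muln_gt0 d0.
have s1L : (s1 <= L)%N by rewrite hLd hs1 leq_pmulr.
have c1s1 : c1 ^+ s1 = 1 by apply/eqP; rewrite hc1.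
have hc' : forall k, ((c1 ^+ s2) ^+ k == 1) = (u1 %| k)%N.
  move=> k; rewrite -exprM hc1.
  have -> : (s1 %| s2 * k)%N = (L %| s2 * k)%N by rewrite hL (dvdn_mulr _ (dvdnn s2)) andbT.
  rewrite hLd hs2 (mulnC d u1) -mulnA (mulnC _ k) dvdn_pmul2r //.
  by rewrite muln_gt0 d0.
have c1u : (c1 ^+ s2) ^+ u1 = 1 by apply/eqP; rewrite hc'.
set X1 := [set x : F1 | [exists i : 'I_s1, x + b1 == x * c1 ^+ i]].
set X2 := [set x : F1 | [exists j : 'I_u1, x + b1 == x * (c1 ^+ s2) ^+ j]].
have -> : [set y : F1 * F2 | [exists i : 'I_L,
       (y.1 + b1 == y.1 * c1 ^+ i) && (y.2 + 0 == y.2 * c2 ^+ i)]] =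
     setX X1 [set 0 : F2] :|: setX X2 [set~ (0 : F2)].
  apply/setP => [[y1 y2]]; rewrite !inE /=.
  case: (eqVneq y2 0) => [->|y20] /=.
    rewrite andbT andbF orbF; apply/existsP/existsP.
      case=> i /andP[H _]; exists (Ordinal (ltn_pmod i s10)) => /=.
      by rewrite expr_mod.
    case=> i H; exists (widen_ord s1L i) => /=.
    by rewrite H add0r mul0r eqxx.
  rewrite andbF andbT; apply/existsP/existsP.
    case=> i /andP[H]; rewrite addr0 -{1}[y2]mulr1 (inj_eq (mulfI y20)) eq_sym hc2.
    move=> di; exists (Ordinal (ltn_pmod (i %/ s2) u10)) => /=.
    by rewrite expr_mod // -exprM mulnC divnK.
  case=> j H.
  have lt : (s2 * j < L)%N.
    by have := ltn_ord j; rewrite hLd hs2; nia.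
  exists (Ordinal lt) => /=; rewrite -exprM in H; rewrite H /=.
  by rewrite addr0 -{1}[y2]mulr1 (inj_eq (mulfI y20)) eq_sym hc2 dvdn_mulr.
rewrite cardsU.
have -> : #|setX X1 [set 0 : F2] :&: setX X2 [set~ (0 : F2)]| = 0%N.
  apply/eqP; rewrite cards_eq0; apply/eqP/setP => -[y1 y2].
  by rewrite !inE /=; case: eqP; rewrite ?andbF.
rewrite subn0 !cardsX cards1 cardsC1.
rewrite /X1 /X2 (@count1 _ c1 b1 s1 s10 hc1 b10) (@count1 _ (c1 ^+ s2) b1 u1 u10 hc' b10).
have : (0 < #|F2|)%N by apply/card_gt0P; exists 0.
move: (#|F2|) => P P0; nia.
Qed.


Lemma card_swap (T1 T2 : finType) (P : T1 -> T2 -> bool) :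
  #|[set y : T1 * T2 | P y.1 y.2]| = #|[set z : T2 * T1 | P z.2 z.1]|.
Proof.
have inj : injective (fun y : T1 * T2 => (y.2, y.1)) by move=> [? ?] [? ?] [-> ->].
rewrite -(card_imset _ inj); apply: eq_card => z; apply/imsetP/idP.
  by case=> y; rewrite inE => H ->; rewrite inE.
by rewrite inE => H; exists (z.2, z.1); rewrite ?inE //; case: z {H}.
Qed.


Lemma pair_count (F1 F2 : finFieldType) (c1 : F1) (c2 : F2) s1 s2 d u1 u2 L (b : F1 * F2) :
  (0 < d)%N -> (0 < u1)%N -> (0 < u2)%N ->
  s1 = (d * u1)%N -> s2 = (d * u2)%N -> L = (d * u1 * u2)%N ->
  (forall k, (c1 ^+ k == 1) = (s1 %| k)%N) ->
  (forall k, (c2 ^+ k == 1) = (s2 %| k)%N) ->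
  (forall k, (L %| k) = (s1 %| k) && (s2 %| k))%N ->
  b != 0 ->
  let N := #|[set y : F1 * F2 | [exists i : 'I_L,
       (y.1 + b.1 == y.1 * c1 ^+ i) && (y.2 + b.2 == y.2 * c2 ^+ i)]]| in
  [\/ addn (addn N u1) u2 = L.+1,
      addn N #|F2| = addn s1 (muln u1 #|F2|.-1) |
      addn N #|F1| = addn s2 (muln u2 #|F1|.-1)].
Proof.
move=> d0 u10 u20 hs1 hs2 hLd hc1 hc2 hL bnz.
have L0 : (0 < L)%N by rewrite hLd !muln_gt0 d0 u10 u20.
have s10 : (0 < s1)%N by rewrite hs1 muln_gt0 d0.
have s20 : (0 < s2)%N by rewrite hs2 muln_gt0 d0.
case: b bnz => b1 b2 bnz N.
case: (eqVneq b1 0) => [b10|b10]; case: (eqVneq b2 0) => [b20|b20].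
- by move: bnz; rewrite b10 b20 => /eqP H; exfalso; apply: H.
- apply: Or33.
  have -> : N = #|[set z : F2 * F1 | [exists i : 'I_L,
       (z.1 + b2 == z.1 * c2 ^+ i) && (z.2 + 0 == z.2 * c1 ^+ i)]]|.
    rewrite /N /= (@card_swap F1 F2 (fun y1 y2 => [exists i : 'I_L,
       (y1 + b1 == y1 * c1 ^+ i) && (y2 + b2 == y2 * c2 ^+ i)])).
    apply: eq_card => z; rewrite !inE b10; apply: eq_existsb => i; exact: andbC.
  apply: (@caseB F2 F1 c2 c1 s2 s1 d u2 u1 L b2) => //.
    by rewrite hLd mulnAC.
  by move=> k; rewrite hL andbC.
- apply: Or32; rewrite /N /= b20.
  exact: (@caseB F1 F2 c1 c2 s1 s2 d u1 u2 L b1).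
- apply: Or31; rewrite /N /= (@caseA F1 F2 c1 c2 s1 s2 L b1 b2 L0 hc1 hc2 hL b10 b20).
  have := @count_nd L s1 s2 L0 s10 s20 hL.
  have -> : (L %/ s1 = u2)%N by rewrite hLd hs1 mulKn // muln_gt0 d0.
  have -> : (L %/ s2 = u1)%N by rewrite hLd hs2 mulnAC mulKn // muln_gt0 d0.
  lia.
Qed.


Section Act.
Variable R : finUnitRingType.
Definition umul (x : R) (a : {unit R}) : R := x * val a.
Lemma umul1 : umul^~ 1%g =1 id.
Proof. by move=> x; rewrite /umul val_unit1 mulr1. Qed.
Lemma umulM x : act_morph umul x.
Proof. by move=> a b; rewrite /umul val_unitM mulrA. Qed.
Definition umul_action := TotalAction umul1 umulM.
End Act.

Lemma zcosetE (R : finUnitRingType) (n : nat) (G : {set {unit 'Z_n}}) x :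
  zcoset G x = orbit (umul_action _) G x.
Proof. by []. Qed.

Lemma card_bij_pred (T U : finType) (f : T -> U) (P : pred U) : bijective f ->
  #|[set x | P (f x)]| = #|[set y | P y]|.
Proof.
case=> g fK gK; rewrite -(card_imset [set x | P (f x)] (can_inj fK)); apply: eq_card => y.
rewrite inE; apply/imsetP/idP.
  by case=> x; rewrite inE => Px ->.
by move=> Py; exists (g y); rewrite ?inE gK.
Qed.

Lemma fixcount (F : finFieldType) (C : F) :
  #|[set y : F | y * C == y]| = if C == 1 then #|F| else 1%N.
Proof.
case: eqP => [->|/eqP C1].
  by rewrite -cardsT; apply: eq_card => y; rewrite !inE mulr1 eqxx.
rewrite -(cards1 (0 : F)); apply: eq_card => y; rewrite !inE.
rewrite -subr_eq0 -{2}[y]mulr1 -mulrBr mulf_eq0 subr_eq0 (negPf C1) orbF.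
by [].
Qed.

Lemma sum_fix L s1 s2 P1 P2 : (0 < L)%N -> (0 < P1)%N -> (0 < P2)%N ->
  (0 < s1)%N -> (0 < s2)%N ->
  (forall k, (L %| k) = (s1 %| k) && (s2 %| k))%N ->
  (\sum_(i < L) (if (s1 %| i)%N then P1 else 1) * (if (s2 %| i)%N then P2 else 1)
   = L + (P1 - 1) * (L %/ s1) + (P2 - 1) * (L %/ s2) + (P1 - 1) * (P2 - 1))%N.
Proof.
move=> L0 P10 P20 s10 s20 hL.
have /andP[d1 d2] : ((s1 %| L) && (s2 %| L))%N by rewrite -hL.
have E : forall i : 'I_L, ((if (s1 %| i)%N then P1 else 1) * (if (s2 %| i)%N then P2 else 1)
   = 1 + (if (s1 %| i)%N then P1 - 1 else 0) + (if (s2 %| i)%N then P2 - 1 else 0)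
     + (if (L %| i)%N then (P1 - 1) * (P2 - 1) else 0))%N.
  by move=> i; rewrite hL; case: (s1 %| i)%N; case: (s2 %| i)%N => /=; nia.
rewrite (eq_bigr _ (fun i _ => E i)) !big_split /= -!big_mkcond /=.
rewrite !sum_nat_cond_const.
rewrite (_ : #|[set _ : 'I_L | true]| = L); last first.
  by rewrite -[RHS](card_ord L); apply: eq_card => i; rewrite inE.
rewrite !card_dvd ?divnn ?L0 //; nia.
Qed.


Lemma unit_eq1 (R : finUnitRingType) (x : {unit R}) : (val x == 1) = (x == 1%g).
Proof.
apply/eqP/eqP => [H|->]; last by rewrite val_unit1.
by apply: val_inj; rewrite H val_unit1.
Qed.

Lemma gen_order (F : finFieldType) (g : {unit F}) s t :
  <[g]>%g = [set: {unit F}] -> (0 < t)%N -> (s * t = #|F|.-1)%N ->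
  forall k, ((val g ^+ t) ^+ k == 1) = (s %| k)%N.
Proof.
move=> gen t0 st k.
rewrite -exprM -val_unitX unit_eq1 -order_dvdn orderE gen card_finField_unit -st.
by rewrite (mulnC t k) dvdn_pmul2r.
Qed.


Lemma final_arith (N p1 p2 s1 s2 d u1 u2 L : nat) : (0 < d)%N -> L = (d * u1 * u2)%N ->
  s1 = (d * u1)%N -> s2 = (d * u2)%N ->
  [\/ addn (addn N u1) u2 = L.+1,
      addn N p2 = addn s1 (muln u1 p2.-1) |
      addn N p1 = addn s2 (muln u2 p1.-1)] ->
  N%:Q \in [:: (s1%:Q * s2%:Q - s1%:Q - s2%:Q) / d%:Q + 1;
               (p1.-1)%:Q * s2%:Q / d%:Q - p1%:Q + s2%:Q;
               (p2.-1)%:Q * s1%:Q / d%:Q - p2%:Q + s1%:Q].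
Proof.
move=> d0 -> -> -> H.
have dQ : d%:R != 0 :> rat by rewrite pnatr_eq0 -lt0n.
have QE : forall k : nat, k%:Q = k%:R := fun k => erefl.
rewrite !QE !inE; case: H => H.
- have HN : N%:R = (d * u1 * u2).+1%:R - u1%:R - u2%:R :> rat by rewrite -H !natrD; ring.
  apply/orP; left; apply/eqP; rewrite HN -addn1 !natrD !natrM.
  by field.
- have HN : N%:R = (d * u1)%:R + (u1 * p2.-1)%:R - p2%:R :> rat.
    by rewrite -natrD -H natrD; ring.
  apply/orP; right; apply/orP; right; apply/eqP; rewrite HN !natrM.
  by field.
- have HN : N%:R = (d * u2)%:R + (u2 * p1.-1)%:R - p1%:R :> rat.
    by rewrite -natrD -H natrD; ring.
  apply/orP; right; apply/orP; left; apply/eqP; rewrite HN !natrM.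
  by field.
Qed.


Theorem theorem3p10 (p1 p2 s1 t1 s2 t2 : nat)
    (g1 : {unit 'F_p1}) (g2 : {unit 'F_p2}) (e : int) :
  prime p1 -> prime p2 -> p1 != p2 ->
  (0 < s1)%N -> (0 < t1)%N -> (0 < s2)%N -> (0 < t2)%N ->
  (s1 * t1 = p1.-1)%N -> (s2 * t2 = p2.-1)%N ->
  <[g1]>%g = [set: {unit 'F_p1}] -> <[g2]>%g = [set: {unit 'F_p2}] ->
  (e%:~R : 'F_p1) = (val g1) ^+ t1 ->
  (e%:~R : 'F_p2) = (val g2) ^+ t2 ->
  let d := gcdn s1 s2 in
  let a0 : rat := (s1%:Q * s2%:Q - s1%:Q - s2%:Q) / d%:Q + 1 in
  let a1 : rat := (p1.-1)%:Q * s2%:Q / d%:Q - p1%:Q + s2%:Q in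
  let a2 : rat := (p2.-1)%:Q * s1%:Q / d%:Q - p2%:Q + s1%:Q in
  let G := gen_units (e%:~R : 'Z_(p1 * p2)) in
  forall h : {set 'Z_(p1 * p2)} -> 'Z_#|zcosets G|,
    {in zcosets G &, injective h} -> h @: zcosets G = setT ->
    zero_difference (coset_index_fun G h) (p1 * p2)
      (1 + t1 + t2 + d * t1 * t2)%N
      (fun k => k%:Q \in [:: a0; a1; a2]).
Proof.
move=> pp1 pp2 ne s10 t10 s20 t20 hst1 hst2 gen1 gen2 he1 he2 d a0 a1 a2 G h hinj hsurj.
have m1 : (1 < p1 * p2)%N by have := prime_gt1 pp1; have := prime_gt1 pp2; nia.
have dv1 : (p1 %| p1 * p2)%N := dvdn_mulr _ (dvdnn _).
have dv2 : (p2 %| p1 * p2)%N := dvdn_mull _ (dvdnn _).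
pose c1 := (val g1 ^+ t1 : 'F_p1).
pose c2 := (val g2 ^+ t2 : 'F_p2).
have hc1 : forall k, (c1 ^+ k == 1) = (s1 %| k)%N.
  by apply: gen_order; rewrite // card_Fp.
have hc2 : forall k, (c2 ^+ k == 1) = (s2 %| k)%N.
  by apply: gen_order; rewrite // card_Fp.
have hpi : forall x y : 'Z_(p1 * p2),
    (x == y) = (pi p1 x == pi p1 y) && (pi p2 x == pi p2 y).
  move=> x y; apply/eqP/andP => [->|[/eqP a /eqP b]]; first by rewrite !eqxx.
  exact: pi_inj.
have bphi : bijective (fun x : 'Z_(p1 * p2) => (pi p1 x, pi p2 x)).
  apply: inj_card_bij.
    by move=> x y [a b]; apply: pi_inj.
  by rewrite card_prod !card_Fp // card_ord Zp_cast.
pose c := (e%:~R : 'Z_(p1 * p2)).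
have hpc1 : pi p1 c = c1 by rewrite pi_int // he1.
have hpc2 : pi p2 c = c2 by rewrite pi_int // he2.
have c10 : c1 != 0 by rewrite expf_neq0 // -unitfE (valP g1).
have c20 : c2 != 0 by rewrite expf_neq0 // -unitfE (valP g2).
have cunit : c \is a GRing.unit.
  case: bphi => psi phiK psiK; apply/unitrPr; exists (psi (c1^-1, c2^-1)).
  have := psiK (c1^-1, c2^-1) => E.
  have e1 := congr1 fst E; have e2 := congr1 snd E; rewrite /= in e1 e2.
  apply: pi_inj => //; rewrite piM //.
    by rewrite hpc1 e1 pi1 // mulfV.
  by rewrite hpc2 e2 pi1 // mulfV.
pose u := unit_of c.
have hu : val u = c by rewrite /u /unit_of insubdK.
pose L := #[u]%g.
have hL : forall k, (L %| k)%N = (s1 %| k)%N && (s2 %| k)%N.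
  move=> k; rewrite /L order_dvdn -unit_eq1 val_unitX hu hpi.
  by rewrite !piX // hpc1 hpc2 !pi1 // hc1 hc2.
have L0 : (0 < L)%N by apply: order_gt0.
have d0 : (0 < d)%N by rewrite gcdn_gt0 s10.
have [u1 hs1] : exists u1, s1 = (d * u1)%N.
  by exists (s1 %/ d)%N; rewrite mulnC divnK // dvdn_gcdl.
have [u2 hs2] : exists u2, s2 = (d * u2)%N.
  by exists (s2 %/ d)%N; rewrite mulnC divnK // dvdn_gcdr.
have u10 : (0 < u1)%N by move: s10; rewrite hs1 muln_gt0 => /andP[].
have u20 : (0 < u2)%N by move: s20; rewrite hs2 muln_gt0 => /andP[].
have hlcm : L = lcmn s1 s2.
  apply/eqP; rewrite eqn_dvd hL dvdn_lcml dvdn_lcmr dvdn_lcm -hL dvdnn.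
  by [].
have hLd : L = (d * u1 * u2)%N.
  have := muln_lcm_gcd s1 s2; rewrite -hlcm -/d => H.
  apply/eqP; rewrite -(eqn_pmul2r d0) H hs1 hs2; apply/eqP; ring.
pose to := umul_action 'Z_(p1 * p2).
have horb : forall x y, (y \in orbit to G x) = [exists i : 'I_L, y == x * c ^+ i].
  move=> x y; apply/imsetP/existsP.
    case=> g gG ->; have [i iL ->] := cyclePmin gG.
    by exists (Ordinal iL); rewrite /= /umul val_unitX hu.
  case=> i /eqP ->; exists (u ^+ i)%g; first exact: mem_cycle.
  by rewrite /= /umul val_unitX hu.
have GE : G :=: [set (u ^+ (nat_of_ord i))%g | i : 'I_L].
  apply/setP => g; apply/idP/imsetP.
    by move=> gG; have [i iL ->] := cyclePmin gG; exists (Ordinal iL).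
  by case=> i _ ->; apply: mem_cycle.
have cardG : #|G| = L by rewrite /L orderE.
have hm : #|zcosets G| = #|orbit to G @: setT|.
  apply: eq_card => X; rewrite /zcosets; apply/imsetP/imsetP; case=> x _ ->; by exists x.
have acts : [acts G, on [set: 'Z_(p1 * p2)] | to].
  by apply/actsP => a _ x; rewrite !inE.
have FC := Frobenius_Cauchy acts.
have hfix : forall i : 'I_L, #|[set: 'Z_(p1 * p2)] :&: ('Fix_to[u ^+ i])%g| =
    ((if (s1 %| i)%N then p1 else 1) * (if (s2 %| i)%N then p2 else 1))%N.
  move=> i.
  have -> : #|[set: 'Z_(p1 * p2)] :&: ('Fix_to[u ^+ i])%g| =
      #|[set x : 'Z_(p1 * p2) | ((pi p1 x, pi p2 x).1 * c1 ^+ i == (pi p1 x, pi p2 x).1)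
             && ((pi p1 x, pi p2 x).2 * c2 ^+ i == (pi p1 x, pi p2 x).2)]|.
    apply: eq_card => x; rewrite setTI !inE /=.
    by rewrite sub1set inE /umul val_unitX hu hpi !piM // !piX // hpc1 hpc2.
  rewrite (@card_bij_pred _ _ _ (fun y => (y.1 * c1 ^+ i == y.1) && (y.2 * c2 ^+ i == y.2)) bphi).
  have -> : [set y : 'F_p1 * 'F_p2 | (y.1 * c1 ^+ i == y.1) && (y.2 * c2 ^+ i == y.2)]
      = setX [set y1 | y1 * c1 ^+ i == y1] [set y2 | y2 * c2 ^+ i == y2].
    by apply/setP => -[y1 y2]; rewrite !inE.
  by rewrite cardsX !fixcount hc1 hc2 !card_Fp.
have S : (\sum_(a in G) #|[set: 'Z_(p1 * p2)] :&: ('Fix_to[a])%g|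
   = \sum_(i < L) (if (s1 %| i)%N then p1 else 1) * (if (s2 %| i)%N then p2 else 1))%N.
  rewrite GE big_imset /=.
    by apply: eq_bigr => i _; exact: hfix.
  move=> i j _ _ /eqP; rewrite eq_expg_mod_order !modn_small ?ltn_ord //.
  by move=> /eqP; apply: val_inj.
have Ls1 : (L %/ s1 = u2)%N by rewrite hLd hs1 mulKn // muln_gt0 d0.
have Ls2 : (L %/ s2 = u1)%N by rewrite hLd hs2 mulnAC mulKn // muln_gt0 d0.
have hmL : (#|zcosets G| * L = L + (p1 - 1) * (L %/ s1) + (p2 - 1) * (L %/ s2)
      + (p1 - 1) * (p2 - 1))%N.
  by rewrite hm -cardG -FC S sum_fix // prime_gt0.
have hm2 : #|zcosets G| = (1 + t1 + t2 + d * t1 * t2)%N.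
  apply/eqP; rewrite -(eqn_pmul2r L0) hmL Ls1 Ls2 !subn1 -hst1 -hst2.
  by rewrite hLd hs1 hs2; apply/eqP; ring.
have zE : forall x, zcoset G x = orbit to G x by [].
split.
- by rewrite card_ord Zp_cast.
- have -> : [set coset_index_fun G h x | x : 'Z_(p1 * p2)] = h @: zcosets G.
    apply/setP => y; apply/imsetP/imsetP.
      case=> x _ ->; exists (zcoset G x) => //.
      by rewrite /zcosets; apply/imsetP; exists x.
    by case=> X /imsetP[x _ ->] ->; exists x.
  by rewrite card_in_imset // hm2.
- move=> a anz.
  have bnz : (pi p1 a, pi p2 a) != 0.
    apply/eqP => E; move/eqP: anz; apply; apply: pi_inj => //; rewrite pi0 //.
      exact: (congr1 fst E).
    exact: (congr1 snd E).
  have hN : #|[set x | coset_index_fun G h (x + a) == coset_index_fun G h x]| =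
     #|[set y : 'F_p1 * 'F_p2 | [exists i : 'I_L,
        (y.1 + (pi p1 a, pi p2 a).1 == y.1 * c1 ^+ i) &&
        (y.2 + (pi p1 a, pi p2 a).2 == y.2 * c2 ^+ i)]]|.
    rewrite -(@card_bij_pred _ _ _ (fun y => [exists i : 'I_L,
        (y.1 + (pi p1 a, pi p2 a).1 == y.1 * c1 ^+ i) &&
        (y.2 + (pi p1 a, pi p2 a).2 == y.2 * c2 ^+ i)]) bphi).
    apply: eq_card => x; rewrite !inE /coset_index_fun.
    rewrite (inj_in_eq hinj); last first.
      by rewrite /zcosets; apply/imsetP; exists x.
      by rewrite /zcosets; apply/imsetP; exists (x + a).
    have -> : (zcoset G (x + a) == zcoset G x) = (x + a \in orbit to G x).
      rewrite !zE; apply/eqP/idP => [<-|H]; first exact: orbit_refl.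
      exact/orbit_eqP.
    rewrite horb; apply: eq_existsb => i /=.
    by rewrite hpi !piD // !piM // !piX // hpc1 hpc2.
  rewrite hN.
  have := @pair_count _ _ c1 c2 s1 s2 d u1 u2 L (pi p1 a, pi p2 a)
    d0 u10 u20 hs1 hs2 hLd hc1 hc2 hL bnz.
  rewrite /= !card_Fp // => H.
  rewrite /a0 /a1 /a2; exact: (@final_arith _ p1 p2 s1 s2 d u1 u2 L d0 hLd hs1 hs2 H).
Qed.
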